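(* Let $f(X)=N(N-1)\sum_{i=1}^{\ell}\beta_i\,t(H_i,X)$ be a subgraph-counting function. Then for all $X,Y\in[0,1]^n$, $$\|\nabla f(X)-\nabla f(Y)\|_1\le C\,\|X-Y\|_1,\qquad C=12\sum_{i=1}^{\ell}|\beta_i|\,|E(H_i)|^2.$$
   Context: $n=\binom N2$; $X\in[0,1]^n$ is identified with a symmetric $N\times N$ matrix with zero diagonal, entries indexed by unordered pairs. For a finite simple graph $H$ on $[m]$, $t(H,X)=\frac{1}{N(N-1)\cdots(N-m+1)}\sum_q\prod_{\{l,l'\}\in E(H)}X_{q_lq_{l'}}$ over injective $q:[m]\to[N]$. For an index $e$, $\partial_ef(X)=\frac12(f(X^{e\leftarrow1})-f(X^{e\leftarrow0}))$ ($X^{e\leftarrow a}$: coordinate $e$ replaced by $a$), $\nabla f(X)=(\partial_ef(X))_e\in\mathbb R^n$. $\|\cdot\|_1$ is the $\ell^1$ norm on $\mathbb R^n$. *)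

(* Defs.v *)
From mathcomp Require Import all_boot all_order all_algebra.
Set Implicit Arguments. Unset Strict Implicit. Unset Printing Implicit Defensive.
Import Order.TTheory GRing.Theory Num.Theory.
Local Open Scope ring_scope.

Definition upair (n : nat) := {e : {set 'I_n} | #|e| == 2%N}.

Record sgraph := SGraph { gv : nat; gE : {set upair gv} }.

Section Defs.
Variable R : realFieldType.

(* Entry of X at a 2-element set s of vertices (0 if s is not a pair). *)
Definition entry (N : nat) (X : upair N -> R) (s : {set 'I_N}) : R :=
  match insub s with Some p => X p | None => 0 end.

Definition tdens (H : sgraph) (N : nat) (X : upair N -> R) : R :=
  (N ^_ (gv H))%:R^-1 *
  \sum_(q : {ffun 'I_(gv H) -> 'I_N} | injectiveb q)
     \prod_(e in gE H) entry X (q @: val e).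

Definition subgraph_count (l : nat) (beta : 'I_l -> R) (H : 'I_l -> sgraph)
  (N : nat) (X : upair N -> R) : R :=
  (N * N.-1)%:R * \sum_(i < l) beta i * tdens (H i) X.

Definition upd (N : nat) (X : upair N -> R) (e : upair N) (a : R) : upair N -> R :=
  fun e' => if e' == e then a else X e'.

Definition pderiv (N : nat) (f : (upair N -> R) -> R) (e : upair N)
  (X : upair N -> R) : R :=
  (f (upd X e 1) - f (upd X e 0)) / 2.

Definition grad (N : nat) (f : (upair N -> R) -> R) (X : upair N -> R) :
  upair N -> R := fun e => pderiv f e X.

Definition norm1 (N : nat) (v : upair N -> R) : R := \sum_(e : upair N) `|v e|.

Definition in_cube (N : nat) (X : upair N -> R) : Prop :=
  forall e, 0 <= X e <= 1.
End Defs.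

(* Main.v *)
Require Import Defs.
From mathcomp Require Import all_boot all_order all_algebra.
From mathcomp Require fingroup perm.
From mathcomp Require Import ring lra.
Set Implicit Arguments. Unset Strict Implicit. Unset Printing Implicit Defensive.
Import Order.TTheory GRing.Theory Num.Theory.
Local Open Scope ring_scope.

Section S.
Variable R : realFieldType.
Variable N : nat.
Implicit Types X Y : upair N -> R.

Lemma entry_upd X (e : upair N) (b : R) s :
  entry (upd X e b) s = if s == val e then b else entry X s.
Proof.
rewrite /entry /upd; case: insubP => [p _ <-|Hn].
  by rewrite (inj_eq val_inj).
case: eqP => // Hs; exfalso; move: Hn; rewrite Hs; by case: e {Hs} => ? /= ->.
Qed.

Lemma entry_sum X s : entry X s = \sum_(e : upair N | val e == s) X e.
Proof.
rewrite /entry; case: insubP => [p _ <-|Hn].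
  rewrite (big_pred1 p) // => e /=; exact: (inj_eq val_inj).
rewrite big_pred0 // => e; apply/negP => /eqP He; move: Hn; rewrite -He.
by case: e {He} => ? /= ->.
Qed.

Lemma entry01 X s : in_cube X -> 0 <= entry X s <= 1.
Proof. by move=> HX; rewrite /entry; case: insubP => [p _ _|_]; [exact: HX|rewrite lexx ler01]. Qed.

Lemma entryB X Y s : `|entry X s - entry Y s| = entry (fun e => `|X e - Y e|) s.
Proof. by rewrite /entry; case: insubP => [p _ _|_] //; rewrite subrr normr0. Qed.

Lemma prod_diff (I : eqType) (r : seq I) (P : pred I) (x y : I -> R) :
  (forall i, 0 <= x i <= 1) -> (forall i, 0 <= y i <= 1) ->
  `|\prod_(i <- r | P i) x i - \prod_(i <- r | P i) y i|
    <= \sum_(i <- r | P i) `|x i - y i|.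
Proof.
move=> Hx Hy.
have H01 : forall z : I -> R, (forall i, 0 <= z i <= 1) ->
   forall r, 0 <= \prod_(i <- r | P i) z i <= 1.
  move=> z Hz; elim=> [|a r' IH]; first by rewrite big_nil ler01 lexx.
  rewrite big_cons; case: (P a) => //.
  case/andP: (Hz a) => h1 h2; case/andP: IH => h3 h4.
  by rewrite mulr_ge0 //= mulr_ile1.
elim: r => [|a r IH]; first by rewrite !big_nil subrr normr0.
rewrite !big_cons; case: (P a) => //.
set p := \prod_(_ <- _ | _) x _; set q := \prod_(_ <- _ | _) y _.
have -> : x a * p - y a * q = x a * (p - q) + (x a - y a) * q by ring.
apply: (le_trans (ler_normD _ _)); rewrite addrC; apply: lerD.
  rewrite normrM; case/andP: (H01 y Hy r) => h1 h2.
  rewrite -[X in _ <= X]mulr1 ler_wpM2l // ger0_norm //.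
rewrite normrM; case/andP: (Hx a) => h1 h2.
apply: (le_trans _ IH); rewrite -[X in _ <= X]mul1r ler_wpM2r // ger0_norm //.
Qed.
End S.

Section G.
Variable R : realFieldType.
Variable N m : nat.
Variable E : {set upair m}.
Variable q : {ffun 'I_m -> 'I_N}.
Hypothesis hq : injective q.
Implicit Types X Y : upair N -> R.


Definition gq X := \prod_(a in E) entry X (q @: val a).
Definition Pa X a := \prod_(b in E | b != a) entry X (q @: val b).

Lemma qinj (a b : upair m) : (q @: val a == q @: val b) = (a == b).
Proof. by rewrite (inj_eq (imset_inj hq)) (inj_eq val_inj). Qed.

Lemma gdiff X e : gq (upd X e 1) - gq (upd X e 0) =
  \sum_(a in E | q @: val a == val e) Pa X a.
Proof.
rewrite /gq; case: (pickP [pred a in E | q @: val a == val e]) => [a0 /= /andP[Ha0 He0]|none].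
  rewrite [RHS](big_pred1 a0); last first.
    move=> a /=; apply/andP/eqP => [[Ha /eqP He]|->]; last by rewrite Ha0 He0.
    by apply/eqP; rewrite -qinj He (eqP He0).
  rewrite !(bigD1 a0 Ha0) /= !entry_upd He0 mul1r mul0r subr0 /Pa.
  apply: eq_bigr => a /andP[_ Hne]; rewrite entry_upd.
  case: eqP => // He; exfalso; move/negP: Hne; apply; rewrite -qinj He (eqP He0) //.
rewrite [RHS]big_pred0; last by move=> a; move: (none a).
apply/eqP; rewrite subr_eq0; apply/eqP; apply: eq_bigr => a Ha; rewrite !entry_upd.
by move: (none a); rewrite /= Ha /= => ->.
Qed.

Lemma sum_val_le (s : {set 'I_N}) (c : R) : 0 <= c ->
  \sum_(e : upair N | val e == s) c <= c.
Proof.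
move=> c0; case: (pickP (fun e : upair N => val e == s)) => [e0 He0|none].
  rewrite (bigD1 e0) //= big1 ?addr0 // => e /andP[He Hne].
  by exfalso; move/negP: Hne; apply; apply/eqP/val_inj; rewrite /= (eqP He) (eqP He0).
by rewrite big_pred0.
Qed.

Lemma Pa_diff X Y a : in_cube X -> in_cube Y ->
  `|Pa X a - Pa Y a| <= \sum_(b in E) entry (fun e => `|X e - Y e|) (q @: val b).
Proof.
move=> HX HY; rewrite /Pa.
apply: le_trans; first (apply: prod_diff => b; [exact: entry01 HX| exact: entry01 HY]).
rewrite /=.
rewrite [X in _ <= X]big_mkcond [X in X <= _]big_mkcond /=.
apply: ler_sum => b _; rewrite entryB.
case: (b \in E) => //=; case: (b != a) => //.
by rewrite /entry; case: insubP => //.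
Qed.

Lemma key X Y : in_cube X -> in_cube Y ->
  \sum_(e : upair N) `|(gq (upd X e 1) - gq (upd X e 0)) - (gq (upd Y e 1) - gq (upd Y e 0))|
  <= #|E|%:R * \sum_(b in E) entry (fun e => `|X e - Y e|) (q @: val b).
Proof.
move=> HX HY.
set T := \sum_(b in E) _.
apply: (@le_trans _ _ (\sum_(e : upair N) \sum_(a in E | q @: val a == val e) `|Pa X a - Pa Y a|)).
  apply: ler_sum => e _; rewrite !gdiff -sumrB; exact: ler_norm_sum.
rewrite (exchange_big_dep (fun a => a \in E)) /=; last by move=> ? ? _ /andP[].
apply: (@le_trans _ _ (\sum_(a in E) `|Pa X a - Pa Y a|)).
  apply: ler_sum => a Ha.
  rewrite (eq_bigl (fun e : upair N => val e == q @: val a)); last first.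
    by move=> e; rewrite Ha /= eq_sym.
  exact: sum_val_le.
apply: (@le_trans _ _ (\sum_(a in E) T)).
  by apply: ler_sum => a _; exact: Pa_diff.
by rewrite sumr_const mulr_natl.
Qed.
End G.
Section Cnt.
Import fingroup perm.
Variable R : realFieldType.
Variable N m : nat.
Variable b : upair m.

Definition K (e : upair N) : R :=
  \sum_(q : {ffun 'I_m -> 'I_N} | injectiveb q && (q @: val b == val e)) 1.

Lemma perm2 (x y x' y' : 'I_N) : x != y -> x' != y' ->
  exists s : {perm 'I_N}, s x = x' /\ s y = y'.
Proof.
move=> hxy hxy'.
set y1 := tperm x x' y.
exists (tperm x x' * tperm y1 y')%g; rewrite !permM tpermL; split; last by rewrite tpermL.
apply: tpermD; last by rewrite eq_sym.
rewrite /y1; apply/eqP => h.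
have : tperm x x' y = tperm x x' x by rewrite tpermL h.
by move/perm_inj/eqP; rewrite eq_sym (negbTE hxy).
Qed.

Lemma perm2set (e e' : upair N) : exists s : {perm 'I_N}, s @: val e = val e'.
Proof.
case/cards2P: (valP e) => x [y [hxy ->]].
case/cards2P: (valP e') => x' [y' [hxy' ->]].
have [s [h1 h2]] := perm2 hxy hxy'.
by exists s; rewrite imsetU1 imset_set1 h1 h2.
Qed.

Lemma K_const e e' : K e = K e'.
Proof.
have [s hs] := perm2set e e'.
pose h (q : {ffun 'I_m -> 'I_N}) := [ffun i => s (q i)].
have hinj : injective h.
  move=> q1 q2 /ffunP H12; apply/ffunP => i; move: (H12 i); rewrite /h !ffunE.
  exact: perm_inj.
rewrite /K [RHS](reindex_inj hinj); apply: eq_bigl => q.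
congr andb.
  apply/injectiveP/injectiveP => H i j.
    by rewrite /h !ffunE => /perm_inj; apply: H.
  by move=> hij; apply: H; rewrite /h !ffunE hij.
have -> : h q @: val b = s @: (q @: val b).
  by rewrite -imset_comp; apply: eq_imset => i; rewrite /h ffunE.
by rewrite -hs (inj_eq (imset_inj (@perm_inj _ s))).
Qed.

Lemma sum_val_eq (s : {set 'I_N}) (c : R) : #|s| == 2 ->
  \sum_(e : upair N | val e == s) c = c.
Proof.
move=> hs; rewrite (big_pred1 (Sub s hs : upair N)) // => e /=.
Qed.

Lemma K_tot : \sum_(e : upair N) K e = (N ^_ m)%:R.
Proof.
rewrite /K (exchange_big_dep (fun q : {ffun 'I_m -> 'I_N} => injectiveb q)) /=; last first.
  by move=> ? ? _ /andP[].
rewrite (eq_bigr (fun _ => 1)); last first.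
  move=> q hq; rewrite (eq_bigl (fun e : upair N => val e == q @: val b)); last first.
    by move=> e; rewrite hq /= eq_sym.
  apply: sum_val_eq; rewrite card_imset; first exact: (valP b).
  exact/injectiveP.
rewrite sumr_const -[in RHS](card_ord N) -[in RHS](card_ord m) -card_inj_ffuns.
by rewrite cardsE.
Qed.

Lemma card_upair : #|{: upair N}| = 'C(N, 2).
Proof.
rewrite card_sig -[N in RHS]card_ord -card_draws; apply: eq_card => A.
by rewrite !inE.
Qed.

Lemma K_val e : (N * N.-1)%:R * ((N ^_ m)%:R)^-1 * K e <= 2.
Proof.
have h1 : (N ^_ m)%:R = (#|{: upair N}|)%:R * K e :> R.
  by rewrite -K_tot (eq_bigr (fun _ => K e)) ?sumr_const ?mulr_natl // => e' _; apply: K_const.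
have h2 : (N * N.-1)%:R = 2 * (#|{: upair N}|)%:R :> R.
  by rewrite card_upair -natrM -mul_bin_diag bin1.
rewrite h2 h1; set u := (#|{: upair N}|)%:R * K e.
have -> : 2 * (#|{: upair N}|)%:R * u^-1 * K e = 2 * (u * u^-1) by rewrite /u; ring.
have [->|nz] := eqVneq u 0; first by rewrite invr0 !mulr0 ler0n.
by rewrite divff // mulr1.
Qed.
End Cnt.

Section Main.
Variable R : realFieldType.
Variable N : nat.

Lemma per_graph m (E : {set upair m}) (X Y : upair N -> R) :
  in_cube X -> in_cube Y ->
  (N * N.-1)%:R * ((N ^_ m)%:R)^-1 / 2 *
  \sum_(e : upair N) `|\sum_(q : {ffun 'I_m -> 'I_N} | injectiveb q)
      ((gq E q (upd X e 1) - gq E q (upd X e 0)) - (gq E q (upd Y e 1) - gq E q (upd Y e 0)))|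
  <= (#|E| ^ 2)%:R * \sum_(e : upair N) `|X e - Y e|.
Proof.
move=> HX HY.
set A := fun e : upair N => `|X e - Y e|.
set c := (N * N.-1)%:R * ((N ^_ m)%:R)^-1 : R.
have c0 : 0 <= c by rewrite /c mulr_ge0 // invr_ge0 ler0n.
have step1 : \sum_(e : upair N) `|\sum_(q : {ffun 'I_m -> 'I_N} | injectiveb q)
      ((gq E q (upd X e 1) - gq E q (upd X e 0)) - (gq E q (upd Y e 1) - gq E q (upd Y e 0)))|
  <= #|E|%:R * \sum_(b in E) \sum_(e : upair N) A e * K R b e.
  apply: (@le_trans _ _ (\sum_(e : upair N) \sum_(q : {ffun 'I_m -> 'I_N} | injectiveb q)
      `|(gq E q (upd X e 1) - gq E q (upd X e 0)) - (gq E q (upd Y e 1) - gq E q (upd Y e 0))|)).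
    by apply: ler_sum => e _; apply: ler_norm_sum.
  rewrite exchange_big /=.
  apply: (@le_trans _ _ (\sum_(q : {ffun 'I_m -> 'I_N} | injectiveb q)
       #|E|%:R * \sum_(b in E) entry A (q @: val b))).
    apply: ler_sum => q /injectiveP hq; exact: key.
  rewrite -mulr_sumr ler_wpM2l // exchange_big /=.
  apply: ler_sum => b _; rewrite le_eqVlt; apply/orP; left; apply/eqP.
  under eq_bigr => q _ do rewrite entry_sum.
  rewrite (exchange_big_dep predT) //=.
  apply: eq_bigr => e _; rewrite /K mulr_sumr.
  by apply: eq_big => [q|q _]; [rewrite eq_sym | rewrite mulr1].
have c20 : 0 <= c / 2 by rewrite divr_ge0 // ler0n.
apply: le_trans (ler_wpM2l c20 step1) _.
rewrite mulrCA natrX expr2 -mulrA ler_wpM2l ?ler0n //.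
apply: (@le_trans _ _ (\sum_(b in E) \sum_(e : upair N) A e)); last first.
  by rewrite sumr_const mulr_natl.
rewrite mulr_sumr; apply: ler_sum => b _; rewrite mulr_sumr; apply: ler_sum => e _.
have A0 : 0 <= A e by rewrite /A normr_ge0.
rewrite mulrCA -[X in _ <= X]mulr1 ler_wpM2l //.
have := K_val R b e; rewrite -/c => h.
rewrite mulrAC ler_pdivrMr ?ltr0n // mul1r.
exact: h.
Qed.
End Main.

Lemma alg1 (R : comRingType) (M bi c t S1 S0 : R) :
  M * (bi * (c * S1) - bi * (c * S0)) * t = bi * (M * c * t * (S1 - S0)).
Proof. ring. Qed.
Lemma alg2 (R : comRingType) (bi c S1 S0 : R) :
  bi * (c * S1) - bi * (c * S0) = bi * (c * (S1 - S0)).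
Proof. ring. Qed.

Section Final.
Variable R : realFieldType.
Variable l : nat.
Variable beta : 'I_l -> R.
Variable H : 'I_l -> sgraph.
Variable N : nat.

Definition Dq m (E : {set upair m}) (q : {ffun 'I_m -> 'I_N}) (X : upair N -> R) e :=
  gq E q (upd X e 1) - gq E q (upd X e 0).

Definition cst m : R := (N * N.-1)%:R * ((N ^_ m)%:R)^-1 / 2.

Lemma pd X e : grad (subgraph_count beta H (N:=N)) X e =
  \sum_(i < l) beta i * (cst (gv (H i)) *
     \sum_(q : {ffun 'I_(gv (H i)) -> 'I_N} | injectiveb q) Dq (gE (H i)) q X e).
Proof.
rewrite /grad /pderiv /subgraph_count /tdens -mulrBr -sumrB mulr_sumr mulr_suml.
apply: eq_bigr => i _; rewrite /Dq sumrB /cst /gq.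
exact: alg1.
Qed.

Lemma gradD X Y e : grad (subgraph_count beta H (N:=N)) X e - grad (subgraph_count beta H (N:=N)) Y e =
  \sum_(i < l) beta i * (cst (gv (H i)) *
     \sum_(q : {ffun 'I_(gv (H i)) -> 'I_N} | injectiveb q) (Dq (gE (H i)) q X e - Dq (gE (H i)) q Y e)).
Proof.
rewrite !pd -sumrB; apply: eq_bigr => i _; by rewrite alg2 -sumrB.
Qed.

Lemma cst_ge0 m : 0 <= cst m.
Proof. by rewrite /cst !mulr_ge0 // invr_ge0 ler0n. Qed.

Theorem lemma28' (X Y : upair N -> R) :
  in_cube X -> in_cube Y ->
  norm1 (fun e => grad (subgraph_count beta H (N:=N)) X e
                  - grad (subgraph_count beta H (N:=N)) Y e)
  <= (12 * \sum_(i < l) `|beta i| * (#|gE (H i)| ^ 2)%:R)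
     * norm1 (fun e => X e - Y e).
Proof.
move=> HX HY; rewrite /norm1.
under eq_bigr => e _ do rewrite gradD.
set nA := \sum_(e : upair N) `|X e - Y e|.
have nA0 : 0 <= nA by rewrite sumr_ge0.
apply: (@le_trans _ _ (\sum_(e : upair N) \sum_(i < l) `|beta i| * (cst (gv (H i)) *
   `|\sum_(q : {ffun 'I_(gv (H i)) -> 'I_N} | injectiveb q) (Dq (gE (H i)) q X e - Dq (gE (H i)) q Y e)|))).
  apply: ler_sum => e _; apply: le_trans (ler_norm_sum _ _ _) _.
  by apply: ler_sum => i _; rewrite normrM (normrM (cst _)) (ger0_norm (cst_ge0 _)).
rewrite exchange_big /=.
apply: (@le_trans _ _ (\sum_(i < l) `|beta i| * ((#|gE (H i)| ^ 2)%:R * nA))).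
  apply: ler_sum => i _; rewrite -mulr_sumr ler_wpM2l // -mulr_sumr.
  exact: per_graph.
rewrite -mulrA mulr_suml mulr_sumr; apply: ler_sum => i _.
rewrite mulrA ler_peMl //.
  by apply: mulr_ge0 => //; apply: mulr_ge0 => //; rewrite ler0n.
lra.
Qed.
End Final.

Theorem lemma28 (R : realFieldType) (l : nat) (beta : 'I_l -> R)
  (H : 'I_l -> sgraph) (N : nat) (X Y : upair N -> R) :
  in_cube X -> in_cube Y ->
  norm1 (fun e => grad (subgraph_count beta H (N:=N)) X e
                  - grad (subgraph_count beta H (N:=N)) Y e)
  <= (12 * \sum_(i < l) `|beta i| * (#|gE (H i)| ^ 2)%:R)
     * norm1 (fun e => X e - Y e).
Proof. exact: lemma28'. Qed.
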